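(* Consider qubit decoherence under dynamical decoupling in multi-state telegraph-like noises, defined as follows. A noise is specified by real values $w_1,\dots,w_M$, a transition-rate matrix $\Gamma$ with $\sum_j\Gamma_{jk}=0$ for all $k$, and a stationary probability vector $y(0)$ with $\Gamma y(0)=0$; let $W=\mathrm{diag}(w_1,\dots,w_M)$. A DD sequence of $N\ge1$ ideal $\pi$ pulses is given by $0<\alpha_1<\dots<\alpha_N<1$, with $\alpha_0=0$, $\alpha_{N+1}=1$, $a_n=\alpha_n-\alpha_{n-1}$, satisfying the echo condition $\sum_{n=1}^{N+1}(-1)^{n+1}a_n=0$, and the decoherence function is $$\langle x(t)\rangle=\sum_{j}\Big[e^{[\Gamma+(-1)^N iW]a_{N+1}t}\cdots e^{[\Gamma-iW]a_2 t}\,e^{[\Gamma+iW]a_1 t}\,y(0)\Big]_j .$$ Then no DD sequence (for any number $N$ of pulses) suppresses the decoherence beyond the third order of the short-time expansion: for every such sequence, $1-\langle x(t)\rangle$ is not $O(t^4)$ as $t\to0$ for all multi-state telegraph-like noises, i.e. the decoherence is at least of order $t^3$.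
   Context: Physical setting: a qubit with Hamiltonian $H=S_z w(t)$ where $w(t)$ is a classical random field jumping randomly among the values $w_j$ with probabilities evolving by $\frac{d}{dt}Y_j=\sum_{j'}\Gamma_{jj'}Y_{j'}$; $x=S_x+iS_y$ and $\langle x(t)\rangle$ is its ensemble average, equal to $1$ in the absence of decoherence. Ideal $\pi$ pulses flip the sign of the effective field, producing the stated formula. *)

(* Defs.v *)
From HB Require Import structures.
From mathcomp Require Import all_boot all_order all_algebra.
From mathcomp Require Import all_classical all_reals all_analysis.
From mathcomp Require Import complex.
Set Implicit Arguments. Unset Strict Implicit. Unset Printing Implicit Defensive.
Import Order.TTheory GRing.Theory Num.Theory.
Import numFieldNormedType.Exports.
Local Open Scope ring_scope.
Local Open Scope complex_scope.
Local Open Scope classical_set_scope.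

Definition expm (R : realType) (n : nat) (A : 'M[R[i]]_n) : 'M[R[i]]_n :=
  lim (series (fun k : nat => (k`!%:R)^-1 *: A ^+ k) @ \oo)%classic.

Definition cmx (R : realType) (m n : nat) (A : 'M[R]_(m, n)) : 'M[R[i]]_(m, n) :=
  map_mx (fun r : R => r%:C) A.

Definition telegraph_noise (R : realType) (M : nat)
    (Gamma : 'M[R]_M) (y0 : 'cV[R]_M) : Prop :=
  [/\ forall k : 'I_M, \sum_(j < M) Gamma j k = 0,
      forall j k : 'I_M, j != k -> 0 <= Gamma j k,
      forall j : 'I_M, 0 <= y0 j 0,
      \sum_(j < M) y0 j 0 = 1
    & Gamma *m y0 = 0].

Definition aint (R : realType) (alpha : nat -> R) (n : nat) : R :=
  alpha n - alpha n.-1.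

Fixpoint dd_state (R : realType) (M : nat) (w : 'I_M -> R) (Gamma : 'M[R]_M)
    (y0 : 'cV[R]_M) (alpha : nat -> R) (t : R) (n : nat) : 'cV[R[i]]_M :=
  match n with
  | 0 => cmx y0
  | n'.+1 =>
      expm ((((aint alpha n) * t)%:C) *:
              (cmx Gamma + ((-1) ^+ n'.+2 * 'i) *: cmx (diag_mx (\row_j w j))))
        *m dd_state w Gamma y0 alpha t n'
  end.

Definition decoherence (R : realType) (M : nat) (w : 'I_M -> R) (Gamma : 'M[R]_M)
    (y0 : 'cV[R]_M) (N : nat) (alpha : nat -> R) (t : R) : R[i] :=
  \sum_(j < M) dd_state w Gamma y0 alpha t N.+1 j 0.

Definition dd_sequence (R : realType) (N : nat) (alpha : nat -> R) : Prop :=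
  [/\ (0 < N)%N, alpha 0 = 0, alpha N.+1 = 1,
      forall n, (n <= N)%N -> alpha n < alpha n.+1
    & \sum_(1 <= n < N.+2) (-1) ^+ n.+1 * aint alpha n = 0].

Definition bigO_t4 (R : realType) (f : R -> R[i]) : Prop :=
  exists (C delta : R), 0 < delta /\
    forall t : R, 0 < t < delta -> `|f t| <= (C * t ^+ 4)%:C.

(* Main.v *)
Require Import Defs.
From HB Require Import structures.
From mathcomp Require Import all_boot all_order all_algebra.
From mathcomp Require Import all_classical all_reals all_analysis.
From mathcomp Require Import complex.
From mathcomp Require Import ring lra.
Import Order.TTheory GRing.Theory Num.Theory.
Import numFieldNormedType.Exports.
Local Open Scope ring_scope.
Local Open Scope complex_scope.
Local Open Scope classical_set_scope.

Section S.
Variable R : realType.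

Lemma normC_real (x : R) : `|x%:C| = `|x|%:C.
Proof. by rewrite normc_def /= expr0n /= addr0 sqrtr_sqr. Qed.

Lemma cvgC (u : nat -> R) (l : R) : u @ \oo --> l ->
  (fun k => (u k)%:C : R[i]^o) @ \oo --> (l%:C : R[i]^o).
Proof.
move=> /cvgrPdist_lt H; apply/cvgrPdist_lt => e e0.
have He : e = (complex.Re e)%:C.
  by case: e e0 => a b; rewrite ltcE /= => /andP[/eqP -> _].
have e0' : 0 < complex.Re e by move: e0; rewrite He ltcR.
near=> k; rewrite -rmorphB normC_real He ltcR.
by near: k; apply: H.
Unshelve. all: by end_near. Qed.

Lemma pow_nil (c : R[i]) (Nm : 'M[R[i]]_2) : Nm * Nm = 0 -> forall k,
  (c *: 1 + Nm) ^+ k = c ^+ k *: 1 + (k%:R * c ^+ k.-1) *: Nm.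
Proof.
move=> NN; elim=> [|k IH]; first by rewrite expr0 scale1r mul0r scale0r addr0.
rewrite exprS IH mulrDl !mulrDr -!scalerAl -!scalerAr !mul1r mulr1 NN scaler0 addr0.
rewrite !scalerA -addrA -scalerDl; congr (_ + _ *: _); first by rewrite exprS.
case: k {IH} => [|k] /=; first by rewrite mul0r mulr0 add0r mul1r expr0.
by rewrite mulrCA -exprS [k.+2%:R]mulrSr mulrDl mul1r.
Qed.

Lemma coefC (c : R) k :
  ((k`!%:R)^-1 * (c%:C)^+k : R[i]) = (exp_coeff c k)%:C.
Proof. by rewrite exp_coeffE /= rmorphM fmorphV rmorphXn rmorph_nat. Qed.

Lemma term_nil (c : R) (Nm : 'M[R[i]]_2) : Nm * Nm = 0 -> forall k,
  (k`!%:R)^-1 *: (c%:C *: 1 + Nm) ^+ k =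
  (exp_coeff c k)%:C *: 1 + (if k is k'.+1 then exp_coeff c k' else 0)%:C *: Nm.
Proof.
move=> NN k; rewrite pow_nil // scalerDr !scalerA coefC; congr (_ + _).
case: k => [|k]; first by rewrite mul0r mulr0 scale0r.
rewrite -coefC; congr (_ *: _).
rewrite [k.+1.-1]/= mulrA; congr (_ * _).
by rewrite factS natrM invfM mulrAC mulVf ?mul1r.
Qed.

Lemma series_nil (c : R) (Nm : 'M[R[i]]_2) : Nm * Nm = 0 -> forall K,
  series (fun k : nat => (k`!%:R)^-1 *: (c%:C *: 1 + Nm) ^+ k) K.+1 =
  (series (exp_coeff c) K.+1)%:C *: 1 + (series (exp_coeff c) K)%:C *: Nm.
Proof.
move=> NN K; rewrite !seriesEord /=.
under eq_bigr do rewrite term_nil //.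
rewrite big_split /= -!scaler_suml -!rmorph_sum; congr (_ + _ *: _).
by rewrite big_ord_recl /= add0r.
Qed.

Lemma expm_nil (c : R) (Nm : 'M[R[i]]_2) : Nm * Nm = 0 ->
  expm (c%:C *: 1 + Nm) = (expR c)%:C *: (1 + Nm).
Proof.
move=> NN; rewrite /expm.
set f := series _.
suff H : f @ \oo --> ((expR c)%:C *: (1 + Nm) : 'M[R[i]^o]_2).
  exact: (cvg_lim _ H).
rewrite -cvg_shiftS /=.
rewrite (_ : (fun n => _) = (fun K => (series (exp_coeff c) K.+1)%:C *: (1 : 'M[R[i]]_2) + (series (exp_coeff c) K)%:C *: Nm)); last first.
  by apply/funext => K; rewrite /f series_nil.
rewrite scalerDr; apply: cvgD; apply: cvgZr_tmp; apply: cvgC.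
  by rewrite (cvg_shiftS (series (exp_coeff c))); exact: is_cvg_series_exp_coeff.
exact: is_cvg_series_exp_coeff.
Qed.

Lemma cext (x y : R[i]) : complex.Re x = complex.Re y -> complex.Im x = complex.Im y -> x = y.
Proof. by case: x => a b; case: y => c d /= -> ->. Qed.

Lemma expR_ge3 (x : R) : 0 <= x -> 1 + x + x^+2/2 + x^+3/6 <= expR x.
Proof.
move=> x0; rewrite /expR.
apply: (le_trans _ (nondecreasing_cvgn_le _ (is_cvg_series_exp_coeff x) 4)).
  rewrite seriesEord /= !big_ord_recr big_ord0 /= /exp_coeff /=.
  have -> : (2`!%:R : R) = 2 by [].
  have -> : (3`!%:R : R) = 6 by [].
  by rewrite expr0 expr1 fact0 !divr1 add0r.
apply: (@nondecreasing_series _ _ xpredT 0) => n _ _.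
by rewrite /exp_coeff /= divr_ge0 // exprn_ge0.
Qed.

Definition Gam : 'M[R]_2 := \matrix_(i, j) (if i == j then -1 else 1).
Definition wv (j : 'I_2) : R := if j == ord0 then 1 else -1.
Definition y0v : 'cV[R]_2 := \col_(j < 2) (1/2).
Definition Nmat (tau s : R) : 'M[R[i]]_2 := \matrix_(i, j)
  (tau%:C * (if i == j then (if i == ord0 then s%:C * 'i else - (s%:C * 'i)) else 1)).
Definition vec (pr : R * R) : 'cV[R[i]]_2 := \col_j
  (if j == ord0 then pr.1%:C + 'i * pr.2%:C else pr.1%:C - 'i * pr.2%:C).

Lemma Xeq tau s : tau%:C *: (cmx Gam + (s%:C * 'i) *: cmx (diag_mx (\row_j wv j)))
  = (-tau)%:C *: 1 + Nmat tau s.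
Proof.
apply/matrixP => i j; rewrite !mxE.
case: i => [[|[|//]] Hi]; case: j => [[|[|//]] Hj]; rewrite /= ?mxE /wv /=.
all: by rewrite ?mulr0n ?mulr1n; apply: cext => /=; ring.
Qed.

Lemma Nsq tau s : s = 1 \/ s = -1 -> Nmat tau s * Nmat tau s = 0.
Proof.
move=> hs; apply/matrixP => i j; rewrite !mxE big_ord_recl big_ord1 !mxE.
case: i => [[|[|//]] Hi]; case: j => [[|[|//]] Hj]; rewrite /=.
all: by case: hs => ->; apply: cext => /=; ring.
Qed.

Lemma Nvec tau s p r : s = 1 \/ s = -1 ->
  (1 + Nmat tau s) *m vec (p, r) =
  vec ((1 + tau) * p - s * tau * r, s * tau * p + (1 - tau) * r).
Proof.
move=> hs; apply/matrixP => i j; rewrite !mxE big_ord_recl big_ord1 !mxE.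
case: i => [[|[|//]] Hi]; case: j => [[|//] Hj]; rewrite /=.
all: by case: hs => ->; apply: cext => /=; ring.
Qed.

Definition sg (n : nat) : R := (-1) ^+ n.+1.

Lemma sg_pm n : sg n = 1 \/ sg n = -1.
Proof.
elim: n => [|n IH]; first by right; rewrite /sg expr1.
by rewrite /sg exprS -/(sg n); case: IH => ->; [right; rewrite mulr1|left; rewrite mulrN1 opprK].
Qed.

Fixpoint pr (alpha : nat -> R) (t : R) (n : nat) : R * R :=
  if n is m.+1 then
    let pq := pr alpha t m in
    let tau := aint alpha m.+1 * t in
    let s := sg m.+1 in
    ((1 + tau) * pq.1 - s * tau * pq.2, s * tau * pq.1 + (1 - tau) * pq.2)
  else (1/2, 0).

Lemma state (alpha : nat -> R) (a0 : alpha 0 = 0) t n :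
  dd_state wv Gam y0v alpha t n = (expR (- (alpha n * t)))%:C *: vec (pr alpha t n).
Proof.
elim: n => [|n IH].
  rewrite /= a0 mul0r oppr0 expR0 scale1r; apply/matrixP => i j; rewrite !mxE.
  by case: i => [[|[|//]] Hi]; case: j => [[|//] Hj]; apply: cext => /=; ring.
rewrite [dd_state _ _ _ _ _ _]/= IH.
have -> : ((-1) ^+ n.+2 : R[i]) = (sg n.+1)%:C by rewrite /sg rmorphXn rmorphN1.
rewrite Xeq expm_nil; last exact: Nsq (sg_pm _).
rewrite -scalemxAl -scalemxAr scalerA Nvec; last exact: sg_pm.
rewrite -rmorphM -expRD; congr ((expR _)%:C *: _).
by rewrite /aint; ring.
Qed.

Lemma aux1 (B X A Y C K t T3 : R) : 0 <= B -> 0 <= X -> 0 <= A -> 0 <= Y -> 0 < t -> t <= 1 ->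
  0 < T3 -> B <= 1 + A * t -> X <= K * (t * T3) -> Y <= K * T3 ->
  B * X + A * t * Y + C * (t * T3) <= ((1 + 2 * A) * K + C) * (t * T3).
Proof.
move=> B0 X0 A0 Y0 t0 t1 T0 hB hX hY.
have h1 : B * X <= (1 + A) * X.
  by apply: ler_wpM2r => //; apply: (le_trans hB); rewrite lerD2l ler_piMr.
have h2 : (1 + A) * X <= (1 + A) * (K * (t * T3)) by apply: ler_wpM2l => //; lra.
have h3 : A * t * Y <= A * t * (K * T3) by apply: ler_wpM2l => //; nra.
have h4 : A * t * (K * T3) = A * (K * (t * T3)) by ring.
lra.
Qed.

Lemma aux2 (B X A Y C D K t T3 : R) : 0 <= B -> 0 <= X -> 0 <= A -> 0 <= Y -> 0 <= C ->
  0 < t -> t <= 1 -> 0 < T3 -> B <= 1 + A * t -> X <= K * (t * T3) -> Y <= K * T3 ->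
  A * t * X + B * Y + D * T3 + C * (t * T3) <= ((1 + 2 * A) * K + D + C) * T3.
Proof.
move=> B0 X0 A0 Y0 C0 t0 t1 T0 hB hX hY.
have K0 : 0 <= K by move: (le_trans Y0 hY); rewrite pmulr_lge0.
have h1 : A * t * X <= A * t * (K * (t * T3)) by apply: ler_wpM2l => //; nra.
have h1b : A * t * (K * (t * T3)) = (A * K * T3) * (t * t) by ring.
have h1c : (A * K * T3) * (t * t) <= A * K * T3.
  rewrite -[X in _ <= X]mulr1; apply: ler_wpM2l; first by rewrite !mulr_ge0 // ltW.
  nra.
have h2 : B * Y <= (1 + A) * Y.
  by apply: ler_wpM2r => //; apply: (le_trans hB); rewrite lerD2l ler_piMr.
have h3 : (1 + A) * Y <= (1 + A) * (K * T3) by apply: ler_wpM2l => //; lra.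
have h4 : C * (t * T3) <= C * T3.
  by apply: ler_wpM2l => //; rewrite ler_piMl // ltW.
lra.
Qed.

Lemma bnd1 (x y a c t K s : R) : `|s| = 1 -> 0 < t <= 1 -> `|x| <= K * t^+4 -> `|y| <= K * t^+3 ->
  `|(1 + a*t) * x - s*(a*t)*y + c * t^+4| <= ((1 + 2 * `|a|)*K + `|c|) * t^+4.
Proof.
move=> hs /andP[t0 t1] hx hy.
have hB : `|1 + a * t| <= 1 + `|a| * t.
  by rewrite (le_trans (ler_normD _ _)) // normr1 normrM (gtr0_norm t0).
have ht4 : t^+4 = t * t^+3 by rewrite exprS.
apply: (le_trans (ler_normD _ _)); rewrite normrM (gtr0_norm (exprn_gt0 4 t0)).
apply: (le_trans (lerD (ler_normB _ _) (lexx _))).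
rewrite !normrM hs (gtr0_norm t0) mul1r ht4.
rewrite ht4 in hx.
apply: aux1 => //; exact: exprn_gt0.
Qed.

Lemma bnd2 (x y a c d t K s : R) : `|s| = 1 -> 0 < t <= 1 -> `|x| <= K * t^+4 -> `|y| <= K * t^+3 ->
  `|s*(a*t)*x + (1 - a*t) * y + d * t^+3 + c * t^+4| <= ((1 + 2 * `|a|)*K + `|d| + `|c|) * t^+3.
Proof.
move=> hs /andP[t0 t1] hx hy.
have hB : `|1 - a * t| <= 1 + `|a| * t.
  by rewrite (le_trans (ler_normB _ _)) // normr1 normrM (gtr0_norm t0).
have ht4 : t^+4 = t * t^+3 by rewrite exprS.
have T0 := exprn_gt0 3 t0.
apply: (le_trans (ler_normD _ _)); rewrite normrM (gtr0_norm (exprn_gt0 4 t0)).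
apply: (le_trans (lerD (ler_normD _ _) (lexx _))).
apply: (le_trans (lerD (lerD (ler_normD _ _) (lexx _)) (lexx _))).
rewrite !normrM hs (gtr0_norm t0) mul1r ht4.
rewrite ht4 in hx.
have := @aux2 `|1 - a * t| `|x| `|a| `|y| `|c| `|d| K t (t^+3).
rewrite !normr_ge0 => /(_ isT isT isT isT isT t0 t1 T0 hB hx hy).
exact: le_trans.
Qed.

Definition PP3 (al F G H : R) := (al^+3/6 - 2* H - F* G + F^+2* al/2)/2.

Lemma id1 (al F G H a s t p r : R) : s = 1 \/ s = -1 ->
  (1 + a* t)* p - s* (a* t)* r - (1/2 + (al+a)/2* t + ((al+a)^+2 - (F+s* a)^+2)/4* t^+2
     + PP3 (al+a) (F+s* a) (G + s* a* al - a* F) (H + a* F^+2 + s* a^+2* F + a^+3/3)* t^+3)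
  = (1 + a* t) * (p - (1/2 + al/2* t + (al^+2 - F^+2)/4* t^+2 + PP3 al F G H* t^+3))
    - s* (a* t)* (r - (F/2* t + G/2* t^+2)) + a * PP3 al F G H * t^+4.
Proof. by case=> ->; rewrite /PP3; field. Qed.

Lemma id2 (al F G H a s t p r : R) : s = 1 \/ s = -1 ->
  s* (a* t)* p + (1 - a* t)* r - ((F + s* a)/2* t + (G + s* a* al - a* F)/2* t^+2)
  = s* (a* t)* (p - (1/2 + al/2* t + (al^+2 - F^+2)/4* t^+2 + PP3 al F G H* t^+3))
    + (1 - a* t)* (r - (F/2* t + G/2* t^+2))
    + (s* a* ((al^+2 - F^+2)/4) - a* (G/2))* t^+3 + s* a* PP3 al F G H * t^+4.
Proof. by case=> ->; rewrite /PP3; field. Qed.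

Definition Fv (alpha : nat -> R) n : R := \sum_(1 <= m < n.+1) sg m * aint alpha m.
Fixpoint Gv (alpha : nat -> R) n : R :=
  if n is m.+1 then Gv alpha m + sg m.+1 * aint alpha m.+1 * alpha m - aint alpha m.+1 * Fv alpha m
  else 0.
Fixpoint Hv (alpha : nat -> R) n : R :=
  if n is m.+1 then Hv alpha m + aint alpha m.+1 * Fv alpha m ^+ 2
     + sg m.+1 * aint alpha m.+1 ^+ 2 * Fv alpha m + aint alpha m.+1 ^+ 3 / 3
  else 0.
Definition polyP (alpha : nat -> R) n t :=
  1/2 + alpha n / 2 * t + (alpha n ^+ 2 - Fv alpha n ^+ 2) / 4 * t ^+ 2
  + PP3 (alpha n) (Fv alpha n) (Gv alpha n) (Hv alpha n) * t ^+ 3.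
Definition polyR (alpha : nat -> R) n t := Fv alpha n / 2 * t + Gv alpha n / 2 * t ^+ 2.

Lemma Fv0 alpha : Fv alpha 0 = 0.
Proof. by rewrite /Fv big_geq. Qed.

Lemma FvS alpha n : Fv alpha n.+1 = Fv alpha n + sg n.+1 * aint alpha n.+1.
Proof. by rewrite /Fv big_nat_recr. Qed.

Lemma approx (alpha : nat -> R) (a0 : alpha 0 = 0) n : exists K : R, forall t, 0 < t <= 1 ->
  `|(pr alpha t n).1 - polyP alpha n t| <= K * t ^+ 4 /\
  `|(pr alpha t n).2 - polyR alpha n t| <= K * t ^+ 3.
Proof.
elim: n => [|n [K IH]].
  exists 0 => t _; rewrite /polyP /polyR /PP3 Fv0 a0 /= !mul0r.
  by split; rewrite ?expr0n /= !(mul0r, mulr0, subr0, addr0, add0r, subrr, normr0, oppr0, mul0r).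
set a := aint alpha n.+1; set s := sg n.+1.
have hs : s = 1 \/ s = -1 by exact: sg_pm.
have ns : `|s| = 1 by case: hs => ->; rewrite ?normrN normr1.
have eal : alpha n.+1 = alpha n + a by rewrite /a /aint /=; ring.
set c := a * PP3 (alpha n) (Fv alpha n) (Gv alpha n) (Hv alpha n).
set d := s * a * ((alpha n ^+ 2 - Fv alpha n ^+ 2) / 4) - a * (Gv alpha n / 2).
set c' := s * a * PP3 (alpha n) (Fv alpha n) (Gv alpha n) (Hv alpha n).
exists ((1 + 2 * `|a|) * K + `|c| + `|d| + `|c'|) => t ht.
have [t0 t1] := andP ht.
have [IH1 IH2] := IH t ht.
have T3 := exprn_gt0 3 t0; have T4 := exprn_gt0 4 t0.
split.
  rewrite /polyP eal FvS -/a -/s /=.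
  rewrite -/a -/s.
  rewrite id1 // -/c.
  have B := @bnd1 _ _ a c t K s ns ht IH1 IH2; rewrite /polyP /polyR in B.
  apply: (le_trans B).
  apply: ler_wpM2r; first exact: ltW.
  by have := normr_ge0 d; have := normr_ge0 c'; lra.
rewrite /polyR FvS -/a -/s /=.
rewrite -/a -/s.
rewrite (id2 _ _ _ (Hv alpha n)) // -/c' -/d.
have B := @bnd2 _ _ a c' d t K s ns ht IH1 IH2; rewrite /polyP /polyR in B.
apply: (le_trans B).
apply: ler_wpM2r; first exact: ltW.
by have := normr_ge0 c; lra.
Qed.

Lemma tele : telegraph_noise Gam y0v.
Proof.
split.
- move=> k; rewrite big_ord_recl big_ord1 !mxE.
  by case: k => [[|[|//]] Hk]; rewrite /= ?addNr ?addrN.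
- by move=> j k /negbTE jk; rewrite mxE jk ler01.
- by move=> j; rewrite mxE divr_ge0 // ?ler01 ?ler0n.
- by rewrite big_ord_recl big_ord1 !mxE; field.
- apply/matrixP => i j; rewrite !mxE big_ord_recl big_ord1 !mxE.
  by case: i => [[|[|//]] Hi]; rewrite /=; ring.
Qed.

Lemma deco (alpha : nat -> R) (a0 : alpha 0 = 0) N t :
  decoherence wv Gam y0v N alpha t =
  (2 * expR (- (alpha N.+1 * t)) * (pr alpha t N.+1).1)%:C.
Proof.
rewrite /decoherence state // big_ord_recl big_ord1 !mxE /=.
by apply: cext => /=; ring.
Qed.

Lemma Hnonneg (alpha : nat -> R) N : (forall n, (n <= N)%N -> alpha n < alpha n.+1) ->
  forall n, (n <= N.+1)%N -> 0 <= Hv alpha n /\ ((0 < n)%N -> 0 < Hv alpha n).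
Proof.
move=> mono; elim=> [|n IH] hn; first by split.
have [IH1 _] := IH (ltnW hn).
have a0 : 0 < aint alpha n.+1 by rewrite /aint /= subr_gt0 mono.
have inc : 0 < aint alpha n.+1 * Fv alpha n ^+ 2
     + sg n.+1 * aint alpha n.+1 ^+ 2 * Fv alpha n + aint alpha n.+1 ^+ 3 / 3.
  move: a0; set a := aint alpha n.+1; set F := Fv alpha n => a0.
  have q : 0 < F ^+ 2 + sg n.+1 * a * F + a ^+ 2 / 3.
    have a2 : 0 < a ^+ 2 by rewrite exprn_gt0.
    case: (sg_pm n.+1) => ->.
      by have := sqr_ge0 (F + a / 2); lra.
    by have := sqr_ge0 (F - a / 2); lra.
  have := mulr_gt0 a0 q.
  by congr (0 < _); ring.
have : 0 < Hv alpha n.+1 by rewrite /= -!addrA; move: inc; rewrite !addrA; lra.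
by move=> h; split => //; exact: ltW.
Qed.

Lemma final (N : nat) (alpha : nat -> R) :
  dd_sequence N alpha ->
  exists (M : nat) (w : 'I_M -> R) (Gamma : 'M[R]_M) (y0 : 'cV[R]_M),
    telegraph_noise Gamma y0 /\
    ~ bigO_t4 (fun t : R => 1 - decoherence w Gamma y0 N alpha t).
Proof.
move=> [N0 a0 a1 mono echo].
exists 2, wv, Gam, y0v; split; first exact: tele.
move=> [C [del [del0 HB]]].
have [K HK] := @approx alpha a0 N.+1.
have H0 : 0 < Hv alpha N.+1 by have [_ ] := @Hnonneg alpha N mono N.+1 (leqnn _); apply.
set H := Hv alpha N.+1 in H0.
have F0 : Fv alpha N.+1 = 0 by exact: echo.
set M0 := `|K| + `|C| + 1.
have M00 : 0 < M0 by rewrite /M0; have := normr_ge0 K; have := normr_ge0 C; lra.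
set t := Num.min (del / 2) (Num.min (1/2) (H / (2 * M0))).
have t0 : 0 < t by rewrite !lt_min !divr_gt0 ?mulr_gt0.
have tdel : t < del by rewrite gt_min; apply/orP; left; lra.
have t12 : t <= 1/2 by rewrite ge_min; apply/orP; right; rewrite ge_min lexx.
have tM : M0 * t <= H / 2.
  have : t <= H / (2 * M0) by rewrite ge_min; apply/orP; right; rewrite ge_min lexx orbT.
  rewrite ler_pdivlMr ?mulr_gt0 // => h.
  by rewrite ler_pdivlMr //; lra.
have ht1 : 0 < t <= 1 by rewrite t0 /=; lra.
have [HK1 _] := HK t ht1.
have := HB t; rewrite t0 tdel => /(_ isT).
rewrite deco // a1 mul1r.
rewrite (_ : 1 - _%:C = (1 - 2 * expR (- t) * (pr alpha t N.+1).1)%:C); last first.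
  by rewrite rmorphB rmorph1.
rewrite normC_real lecR => hB.
move: HK1; rewrite /polyP a1 F0 /PP3 ler_norml => /andP[_ hp].
set p := (pr alpha t N.+1).1 in hp hB.
set E := expR (- t) in hB.
have EX : E * expR t = 1 by rewrite /E mulrC expRxMexpNx_1.
have E12 : 1/2 <= E by have := expR_ge1Dx (- t); rewrite -/E; lra.
have X3 := @expR_ge3 t (ltW t0).
set X := expR t in EX X3.
have T3 : 0 < t ^+ 3 by rewrite exprn_gt0.
have e4 : t ^+ 4 = t * t ^+ 3 by rewrite exprS.
rewrite e4 in hp hB.
have hK : K * t * t^+3 <= H / 2 * t ^+ 3.
  apply: ler_wpM2r; first exact: ltW.
  apply: le_trans tM; apply: ler_wpM2r; first exact: ltW.
  by rewrite /M0; have := ler_norm K; have := normr_ge0 C; lra.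
have hC : C * t * t^+3 < H / 2 * t ^+ 3.
  rewrite ltr_pM2r //.
  apply: lt_le_trans tM; rewrite ltr_pM2r //.
  by rewrite /M0; have := ler_norm C; have := normr_ge0 K; lra.
have h1 : H * t ^+ 3 <= X - 2 * p.
  move: X3 hp hK; rewrite -/H !expr1n expr0n /= !mul0r !mul1r.
  set T2 := t ^+ 2; set U3 := t ^+ 3; lra.
have h2 : 1 / 2 * (H * t ^+ 3) <= E * (X - 2 * p).
  apply: ler_pM => //.
  by apply: mulr_ge0; [exact: ltW | exact: ltW].
have h3 : 1 - 2 * E * p = E * (X - 2 * p).
  by move: EX; lra.
have h4 := ler_norm (1 - 2 * E * p).
move: hC h2 h3 h4 hB; rewrite -!mulrA; lra.
Qed.
End S.

Local Close Scope classical_set_scope.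

Theorem corollary1 (R : realType) (N : nat) (alpha : nat -> R) :
  dd_sequence N alpha ->
  exists (M : nat) (w : 'I_M -> R) (Gamma : 'M[R]_M) (y0 : 'cV[R]_M),
    telegraph_noise Gamma y0 /\
    ~ bigO_t4 (fun t : R => 1 - decoherence w Gamma y0 N alpha t).
Proof. exact: final. Qed.
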